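(* (Bounded suboptimality of MPLP.) Let $G=(\mathcal{V},\mathcal{E})$ be a directed graph with start $s_0$, goal region $\mathcal{G}$, true edge costs $c^t$ and lazy edge costs $c^l\le c^t$, and let $c^*$ be the cost of an optimal path from $s_0$ to $\mathcal{G}$ in $G$ with respect to $c^t$. Then MPLP, run with heuristic inflation factor $\epsilon^h\ge1$, terminates with a path $\pi$ such that $\mathrm{cost}(\pi)\le \epsilon^h\cdot c^*$.
   Context: Each edge $e=\{s,a\}$ of $G$ (a deterministic action $a$ applied at state $s$) has a true cost $c^t(e)\in[0,\infty]$ computed by an expensive evaluation routine and a cheap lazy cost $c^l(e)\le c^t(e)$; a path's cost is the sum of its edge costs and a path is feasible if all its edges have finite true cost. MPLP (Massively Parallel Lazy Planning): a search process repeatedly runs weighted A* (ComputePath) with an admissible heuristic inflated by $\epsilon^h$ on the current intermediate graph, in which evaluated edges carry their true costs and unevaluated edges their lazy costs; newly discovered edges are put in a queue $E^{open}$ and are evaluated asynchronously in parallel by a pool of threads, which update the graph with the true costs. When a search reaches the goal, its goal $g$-value is stored as $goal\_g$ and the backtracked path is recorded; a monitoring process waits for the edges of recorded paths to be evaluated and MPLP returns a recorded path $\pi$ as the solution only if $\pi$ is feasible and its true cost satisfies $c^t(\pi)\le goal\_g$ (the $g$-value of the goal from the most recent search). *)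

(* Defs.v *)
From HB Require Import structures.
From mathcomp Require Import all_boot all_order all_algebra.
From mathcomp Require Import constructive_ereal.
Set Implicit Arguments. Unset Strict Implicit. Unset Printing Implicit Defensive.
Import Order.TTheory GRing.Theory Num.Theory.
Local Open Scope ring_scope.
Local Open Scope ereal_scope.

(* The graph: finite state set V, finite action set A, deterministic
   successor function succ.  An edge is a pair (s, a) : V * A.
   Edge costs are extended reals (value +oo = infeasible edge). *)
Section MPLP.
Variables (R : realFieldType) (V A : finType) (succ : V -> A -> V).

Definition edge := (V * A)%type.

Fixpoint is_walk (s : V) (p : seq edge) : bool :=
  match p with
  | [::] => true
  | e :: p' => (e.1 == s) && is_walk (succ e.1 e.2) p'
  end.

Fixpoint walk_end (s : V) (p : seq edge) : V :=
  match p with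
  | [::] => s
  | e :: p' => walk_end (succ e.1 e.2) p'
  end.

Definition goal_path (Goal : {set V}) (s : V) (p : seq edge) : bool :=
  is_walk s p && (walk_end s p \in Goal).

Definition pcost (c : V -> A -> \bar R) (p : seq edge) : \bar R :=
  \sum_(e <- p) c e.1 e.2.

Definition feasible (ct : V -> A -> \bar R) (p : seq edge) : bool :=
  all (fun e => ct e.1 e.2 < +oo) p.

Definition admissible (ct : V -> A -> \bar R) (Goal : {set V}) (h : V -> R) :=
  forall s p, goal_path Goal s p -> (h s)%:E <= pcost ct p.

Definition icost (ct cl : V -> A -> \bar R) (Ev : {set edge}) (s : V) (a : A)
  : \bar R := if (s, a) \in Ev then ct s a else cl s a.

Inductive astate :=
  | Run of {ffun V -> \bar R} & {ffun V -> option edge} & {set V}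
  | Fin of option (\bar R * seq edge).

Fixpoint backtrack (n : nat) (par : {ffun V -> option edge}) (s : V)
  : seq edge :=
  match n with
  | 0 => [::]
  | n'.+1 => match par s with
             | None => [::]
             | Some e => rcons (backtrack n' par e.1) e
             end
  end.

Section Astar.
Variables (c : V -> A -> \bar R) (Goal : {set V}) (s0 : V)
          (eps : R) (h : V -> R).

Definition fval (g : {ffun V -> \bar R}) (s : V) : \bar R :=
  g s + (eps * h s)%:E.

Definition relax (s : V) (gs : \bar R)
    (st : {ffun V -> \bar R} * {ffun V -> option edge} * {set V}) (a : A) :=
  let: (g, par, op) := st in
  let s' := succ s a in
  let ng := gs + c s a in
  if ng < g s' then
    ([ffun x => if x == s' then ng else g x],
     [ffun x => if x == s' then Some (s, a) else par x],
     s' |: op)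
  else (g, par, op).

Definition astep (st : astate) : astate :=
  match st with
  | Fin r => Fin r
  | Run g par op =>
    match [pick s in op | [forall t in op, fval g s <= fval g t]] with
    | None => Fin None
    | Some s =>
      if s \in Goal then Fin (Some (g s, backtrack #|V| par s))
      else
        let: (g', par', op') :=
          foldl (relax s (g s)) (g, par, op :\ s) (enum A) in
        Run g' par' op'
    end
  end.

Definition ainit : astate :=
  Run [ffun x => if x == s0 then 0 else +oo] [ffun _ => None] [set s0].

Definition compute_path (r : option (\bar R * seq edge)) : Prop :=
  exists n, iter n astep ainit = Fin r.

End Astar.

(* ---------- MPLP ----------
   Ev k is the set of edges whose evaluation (by the asynchronous
   evaluation threads) has completed by the time of the k-th search;
   search k runs ComputePath on the intermediate graph icost (Ev k). *)
Definition search (ct cl : V -> A -> \bar R) (Goal : {set V}) (s0 : V)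
    (eps : R) (h : V -> R) (Ev : nat -> {set edge}) (k : nat) r :=
  compute_path (icost ct cl (Ev k)) Goal s0 eps h r.

Definition mplp_returns ct cl Goal s0 eps h Ev (k : nat) (p : seq edge) :=
  (forall i, (i <= k)%N -> exists r, search ct cl Goal s0 eps h Ev i r) /\
  (exists j gj, (j <= k)%N /\ search ct cl Goal s0 eps h Ev j (Some (gj, p))) /\
  (exists goal_g pk, search ct cl Goal s0 eps h Ev k (Some (goal_g, pk)) /\
     all (fun e => e \in Ev k) p /\ feasible ct p /\ pcost ct p <= goal_g).

End MPLP.

(* Main.v *)
Require Import Defs.
From HB Require Import structures.
From mathcomp Require Import all_boot all_order all_algebra.
From mathcomp Require Import constructive_ereal.
From mathcomp Require Import lra.
From Stdlib Require Import Classical.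
Set Implicit Arguments. Unset Strict Implicit. Unset Printing Implicit Defensive.
Import Order.TTheory GRing.Theory Num.Theory.
Local Open Scope ring_scope.
Local Open Scope ereal_scope.

Section Proofs.
Variables (R : realFieldType) (V A : finType) (succ : V -> A -> V).
Variables (c ct : V -> A -> \bar R) (Goal : {set V}) (s0 : V) (eps : R) (h : V -> R).
Hypothesis c_ge0 : forall s a, 0 <= c s a.

Lemma relax_fold s gs l (g : {ffun V -> \bar R}) (par : {ffun V -> option (V * A)}) op :
  let res := foldl (relax succ c s gs) (g, par, op) l in
  (forall x, (res.1.1 x = g x /\ res.1.2 x = par x /\ (x \in res.2) = (x \in op)) \/
     (exists a, [/\ succ s a = x, res.1.1 x = gs + c s a, res.1.1 x < g x,
                 res.1.2 x = Some (s, a) & x \in res.2])) /\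
  (forall a, a \in l -> res.1.1 (succ s a) <= gs + c s a).
Proof.
elim: l g par op => [|a l IH] g par op /=.
  by split => // x; left.
set st := relax succ c s gs (g, par, op) a.
have Hst : (forall x, (st.1.1 x = g x /\ st.1.2 x = par x /\ (x \in st.2) = (x \in op)) \/
     (exists a', [/\ succ s a' = x, st.1.1 x = gs + c s a', st.1.1 x < g x,
                 st.1.2 x = Some (s, a') & x \in st.2])) /\
      st.1.1 (succ s a) <= gs + c s a.
  rewrite /st /relax; case: ifP => Hlt /=.
    split; last by rewrite ffunE eqxx.
    move=> x; rewrite !ffunE; case: eqP => [Ex|Nx]; last first.
      by left; rewrite in_setU1; move/eqP/negbTE: Nx => ->.
    by subst x; right; exists a; rewrite in_setU1 eqxx.
  by split; [move=> x; left | rewrite leNgt Hlt].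
have -> : foldl (relax succ c s gs) (relax succ c s gs (g, par, op) a) l =
          foldl (relax succ c s gs) (st.1.1, st.1.2, st.2) l by rewrite /st; case: (relax succ c s gs (g, par, op) a) => [[]].
case: Hst => Hst Ha.
case: (IH st.1.1 st.1.2 st.2) => IH1 IH2.
set res := foldl _ _ _ in IH1 IH2 *.
split.
  move=> x; case: (IH1 x) => [[e1 [e2 e3]]|[a' [E1 E2 E3 E4 E5]]].
    case: (Hst x) => [[f1 [f2 f3]]|[a'' [F1 F2 F3 F4 F5]]].
      by left; rewrite e1 e2 e3 f1 f2 f3.
    by right; exists a''; rewrite e1 e2 e3; split.
  right; exists a'; split => //.
  case: (Hst x) => [[f1 _]|[a'' [F1 F2 F3 F4 F5]]]; first by rewrite -f1.
  exact: lt_trans E3 F3.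
move=> b; rewrite in_cons => /orP[/eqP->|Hb]; last exact: IH2.
case: (IH1 (succ s a)) => [[e1 _]|[a' [E1 E2 E3 E4 E5]]]; first by rewrite e1.
exact: le_trans (ltW E3) Ha.
Qed.

Definition keylt (g : V -> \bar R) (t : V -> nat) (y x : V) : bool :=
  (g y < g x) || ((g y == g x) && (t y < t x)%N).

Record Inv (g : {ffun V -> \bar R}) (par : {ffun V -> option (V * A)}) (op : {set V}) : Prop := {
 i_ge0 : forall x, 0 <= g x;
 i_s0 : g s0 = 0;
 i_op : forall x, x \in op -> g x < +oo;
 i_closed : forall x, x \notin op -> forall a, g (succ x a) <= g x + c x a;
 i_goal : forall x, x \in Goal -> x \notin op -> g x = +oo;
 i_par : exists t : V -> nat, forall x e, par x = Some e ->
    [/\ succ e.1 e.2 = x, g e.1 + c e.1 e.2 <= g x & keylt g t e.1 x];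
 i_none : forall x, par x = None -> x = s0 \/ g x = +oo;
 i_wit : forall x, g x < +oo -> exists Q L, [/\ pcost c Q = g x, uniq L,
    size L = (size Q).+1 & forall y, y \in L -> g y <= pcost c Q] }.

Lemma pcost_rcons Q e : pcost c (rcons Q e) = pcost c Q + c e.1 e.2.
Proof. by rewrite /pcost -cats1 big_cat big_seq1. Qed.

Lemma pcost_ge0 Q : 0 <= pcost c Q.
Proof. by rewrite /pcost; apply: sume_ge0 => e _. Qed.

Lemma init_inv :
  Inv [ffun x => if x == s0 then 0 else +oo] [ffun _ => None] [set s0].
Proof.
split.
- by move=> x; rewrite ffunE; case: ifP => _; [exact: lexx | exact: leey].
- by rewrite ffunE eqxx.
- by move=> x; rewrite in_set1 ffunE => ->; rewrite ltey.
- move=> x; rewrite in_set1 ffunE => /negbTE -> a.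
  by rewrite addye ?leey // gt_eqF // (lt_le_trans _ (c_ge0 x a)) // ltNyr.
- by move=> x _; rewrite in_set1 ffunE => /negbTE ->.
- by exists (fun _ => 0%N) => x e; rewrite ffunE.
- by move=> x _; rewrite ffunE; case: eqP => [->|_]; [left|right].
- move=> x; rewrite ffunE; case: eqP => [Ex|//] _; subst x.
  by exists [::], [:: s0]; rewrite /pcost big_nil; split => // y; rewrite inE => /eqP ->; rewrite ffunE eqxx.
Qed.

Lemma step_inv g par op s : Inv g par op -> s \in op -> s \notin Goal ->
  let res := foldl (relax succ c s (g s)) (g, par, op :\ s) (enum A) in
  Inv res.1.1 res.1.2 res.2.
Proof.
move=> I Hs HsG res.
have [D F] := relax_fold s (g s) (enum A) g par (op :\ s).
rewrite -/res in D F.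
have Gle : forall x, res.1.1 x <= g x.
  by move=> x; case: (D x) => [[-> _]|[a [_ _ /ltW //]]].
have Gs : res.1.1 s = g s.
  case: (D s) => [[-> _]//|[a [_ E L _ _]]].
  by move: L; rewrite E ltNge leeDl.
have Fall : forall a, res.1.1 (succ s a) <= g s + c s a.
  by move=> a; apply: F; rewrite mem_enum.
case: I => I1 I2 I3 I4 I5 [t I6] I7 I8.
split.
- move=> x; case: (D x) => [[-> _]|[a [_ -> _ _ _]]]; [exact: I1| exact: adde_ge0].
- case: (D s0) => [[-> _]//|[a [_ E L _ _]]].
  by move: L; rewrite I2 E ltNge adde_ge0.
- move=> x; case: (D x) => [[E1 [_ ->]]|[a [_ _ L _ _]]].
    by rewrite E1 in_setD1 => /andP[_ /I3].
  by move=> _; exact: lt_le_trans L (leey _).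
- move=> x; case: (D x) => [[E1 [_ ->]]|[a [_ _ _ _ ->]]] // Hx b.
  rewrite E1; case: (eqVneq x s) => [Exs|Hxs].
    by subst x; exact: Fall.
  have Hx' : x \notin op by move: Hx; rewrite in_setD1 Hxs.
  exact: le_trans (Gle _) (I4 _ Hx' b).
- move=> x HG; case: (D x) => [[E1 [_ ->]]|[a [_ _ _ _ ->]]] // Hx.
  rewrite E1; apply: I5 => //; move: Hx; rewrite in_setD1 negb_and negbK => /orP[/eqP Exs|//].
  by subst x; rewrite HG in HsG.
- pose T := (\max_(y : V) t y)%N.+1.
  exists (fun x => if res.1.1 x == g x then t x else T) => x e.
  case: (D x) => [[E1 [E2 _]]|[a [Ea E1 L E2 _]]].
    rewrite E2 => /I6 [S1 S2 S3]; split => //.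
      rewrite E1; apply: le_trans S2; apply: leeD2r; exact: Gle.
    rewrite /keylt E1 eqxx.
    case: (D e.1) => [[F1 _]|[b [_ _ Lb _ _]]].
      by rewrite F1 eqxx.
    apply/orP; left; apply: lt_le_trans Lb _.
    by move: S3; rewrite /keylt => /orP[/ltW //|/andP[/eqP -> _]].
  rewrite E2 => -[<-] /=; split => //.
    by rewrite Gs E1.
  rewrite /keylt Gs E1 eqxx.
  have -> : (g s + c s a == g x) = false by rewrite -E1 lt_eqF.
  have := leeDl (g s) (c_ge0 s a); rewrite le_eqVlt => /orP[/eqP <-|->] //.
  by rewrite eqxx /T ltnS; apply/orP; right; exact: leq_bigmax.
- move=> x; case: (D x) => [[E1 [E2 _]]|[a [_ _ _ -> _]]] //.
  rewrite E2 E1; exact: I7.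
- move=> x; case: (D x) => [[E1 _]|[a [Ea E1 L _ _]]] Hx.
    rewrite E1 in Hx; have [Q [L [W1 W2 W3 W4]]] := I8 x Hx.
    exists Q, L; rewrite E1; split => // y /W4; apply: le_trans; exact: Gle.
  have Hgs : g s < +oo := I3 s Hs.
  have [Q [L0 [W1 W2 W3 W4]]] := I8 s Hgs.
  exists (rcons Q (s,a)), (rcons L0 x); split.
  + by rewrite pcost_rcons W1 E1.
  + rewrite rcons_uniq W2 andbT; apply/negP => /W4 Hle.
    rewrite W1 E1 in Hle L.
    by move: (le_lt_trans (le_trans Hle (leeDl _ (c_ge0 s a))) L); rewrite ltxx.
  + by rewrite !size_rcons W3.
  + move=> y; rewrite mem_rcons inE => /orP[/eqP->|/W4 Hy].
      by rewrite pcost_rcons W1 E1.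
    rewrite pcost_rcons W1; apply: le_trans (Gle y) _; apply: le_trans Hy _.
    by rewrite W1; exact: leeDl.
Qed.

Lemma count_lt (T : eqType) (a b : pred T) (s : seq T) :
  subpred a b -> (exists2 y, y \in s & b y && ~~ a y) -> (count a s < count b s)%N.
Proof.
move=> Hab; elim: s => [|z s IH] Hex; first by case: Hex.
case: Hex => y; rewrite in_cons => /orP[/eqP Eyz|Hy] Hb /=.
  subst y; case/andP: Hb => -> /negbTE ->; rewrite add0n add1n ltnS; exact: sub_count.
have := IH (ex_intro2 _ _ y Hy Hb).
case Haz: (a z); first by rewrite (Hab _ Haz) ltn_add2l.
move=> H; apply: leq_trans _ (leq_addl (b z) _); exact: H.
Qed.

Fixpoint allseqs (n : nat) : seq (seq (V * A)) :=
  if n is n'.+1 then [::] :: [seq e :: q | e <- enum {: V * A}, q <- allseqs n']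
  else [:: [::]].

Lemma allseqsP n Q : (size Q <= n)%N -> Q \in allseqs n.
Proof.
elim: n Q => [|n IH] [|e Q] //= Hs; rewrite ?inE ?eqxx //.
apply/orP; right; apply: (allpairs_f (fun e q => e :: q)); first by rewrite mem_enum.
exact: IH.
Qed.

Definition rank (x : \bar R) : nat :=
  count (fun y => y < x) (map (pcost c) (allseqs #|V|)).

Definition mu (g : {ffun V -> \bar R}) (op : {set V}) : nat :=
  ((\sum_(x : V) rank (g x)) * #|V|.+1 + #|op|)%N.

Lemma rank_le x y : x <= y -> (rank x <= rank y)%N.
Proof. move=> Hxy; apply: sub_count => z /= Hz; exact: lt_le_trans Hz Hxy. Qed.

Lemma wit_in_CS (g : {ffun V -> \bar R}) par op x : Inv g par op -> g x < +oo ->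
  g x \in map (pcost c) (allseqs #|V|).
Proof.
move=> I Hx; have [Q [L [W1 W2 W3 _]]] := i_wit I Hx.
rewrite -W1; apply: map_f; apply: allseqsP.
have : (size L <= #|V|)%N by rewrite -(card_uniqP W2); exact: max_card.
by rewrite W3 => /ltnW.
Qed.

Lemma step_mu g par op s : Inv g par op -> s \in op -> s \notin Goal ->
  let res := foldl (relax succ c s (g s)) (g, par, op :\ s) (enum A) in
  (mu res.1.1 res.2 < mu g op)%N.
Proof.
move=> I Hs HsG; pose res := foldl (relax succ c s (g s)) (g, par, op :\ s) (enum A).
change (mu res.1.1 res.2 < mu g op)%N.
have I' := step_inv I Hs HsG; rewrite -/res in I'.
have [D _] := relax_fold s (g s) (enum A) g par (op :\ s).
rewrite -/res in D.
have Gle : forall x, res.1.1 x <= g x.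
  by move=> x; case: (D x) => [[-> _]|[a [_ _ /ltW //]]].
have Mle : (\sum_(x : V) rank (res.1.1 x) <= \sum_(x : V) rank (g x))%N.
  by apply: leq_sum => x _; exact: rank_le.
case: (boolP [exists x, res.1.1 x < g x]) => [/existsP[x Hx]|Hn].
  have Mlt : (\sum_(x : V) rank (res.1.1 x) < \sum_(x : V) rank (g x))%N.
    rewrite (bigD1 x) //= [X in (_ < X)%N](bigD1 x) //=.
    rewrite -addSn; apply: leq_add; last by apply: leq_sum => y _; exact: rank_le.
    apply: count_lt; first by move=> z /= Hz; exact: lt_le_trans Hz (Gle x).
    exists (res.1.1 x); last by rewrite Hx ltxx.
    by apply: (wit_in_CS I'); exact: lt_le_trans Hx (leey _).
  rewrite /mu; have := max_card (mem res.2); have := max_card (mem op).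
  move: Mlt; set M1 := (\sum_(x : V) _)%N; set M2 := (\sum_(x : V) _)%N.
  move=> Mlt C1 C2.
  apply: (@leq_ltn_trans (M1 * #|V|.+1 + #|V|)); first by rewrite leq_add2l.
  apply: (@leq_trans (M1.+1 * #|V|.+1)); first by rewrite mulSn addnC ltn_add2r.
  apply: leq_trans (leq_addr _ _); exact: leq_mul.
have Hop : res.2 = op :\ s.
  apply/setP => x; case: (D x) => [[_ [_ ->]] //|[a [_ _ L _ _]]].
  by move/existsP: Hn => Hn; exfalso; apply: Hn; exists x.
rewrite /mu Hop; apply: leq_ltn_trans (_ : _ <= (\sum_x rank (g x)) * #|V|.+1 + #|op :\ s|)%N _.
  by rewrite leq_add2r leq_mul2r Mle orbT.
by rewrite ltn_add2l [X in (_ < X)%N](cardsD1 s) Hs.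
Qed.

Hypothesis c_le : forall s a, c s a <= ct s a.
Hypothesis eps_ge1 : (1 <= eps)%R.
Hypothesis h_ge0 : forall s, (0 <= h s)%R.
Hypothesis adm : admissible succ ct Goal h.

Lemma fin_of (x : \bar R) : 0 <= x -> x < +oo -> exists r, x = r%:E.
Proof. case: x => [r _ _|_|] //; first by exists r. Qed.

Lemma addoo_l (x y : \bar R) : 0 <= x -> 0 <= y -> x + y < +oo -> x < +oo.
Proof. by move=> _ hy; apply: le_lt_trans (leeDl _ hy). Qed.

Lemma addoo_r (x y : \bar R) : 0 <= x -> 0 <= y -> x + y < +oo -> y < +oo.
Proof. by move=> hx _; apply: le_lt_trans (leeDr _ hx). Qed.

Lemma pcost_cons (d : V -> A -> \bar R) e Q : pcost d (e :: Q) = d e.1 e.2 + pcost d Q.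
Proof. by rewrite /pcost big_cons. Qed.

Lemma pcost_cat (d : V -> A -> \bar R) Q1 Q2 : pcost d (Q1 ++ Q2) = pcost d Q1 + pcost d Q2.
Proof. by rewrite /pcost big_cat. Qed.

Lemma pcost_le Q : pcost c Q <= pcost ct Q.
Proof. by rewrite /pcost; apply: lee_sum => e _. Qed.

Lemma ct_ge0 s a : 0 <= ct s a.
Proof. exact: le_trans (c_ge0 s a) (c_le s a). Qed.

Lemma pcostt_ge0 Q : 0 <= pcost ct Q.
Proof. by rewrite /pcost; apply: sume_ge0 => e _; exact: ct_ge0. Qed.

Lemma reach g par op : Inv g par op -> forall q x (al : \bar R),
  is_walk succ x q -> g x <= al -> walk_end succ x q \in Goal -> al + pcost c q < +oo ->
  exists q1 q2 y, [/\ q = q1 ++ q2, y \in op, is_walk succ y q2,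
     walk_end succ y q2 = walk_end succ x q & g y <= al + pcost c q1].
Proof.
move=> I; elim=> [|e q IH] x al /= Hw Hg HG Hfin.
  case: (boolP (x \in op)) => Hx.
    by exists [::], [::], x; split => //; rewrite /pcost big_nil adde0.
  move: Hfin; rewrite /pcost big_nil adde0 => Hfin.
  by move: (le_lt_trans Hg Hfin); rewrite (i_goal I HG Hx) ltxx.
case: (boolP (x \in op)) => Hx.
  by exists [::], (e :: q), x; split => //; rewrite /pcost big_nil adde0.
case/andP: Hw => /eqP Ex Hw.
have Hg' : g (succ e.1 e.2) <= (al + c e.1 e.2).
  rewrite Ex; apply: le_trans (i_closed I Hx e.2) _; exact: leeD2r.
have Hfin' : (al + c e.1 e.2) + pcost c q < +oo by rewrite -addeA -pcost_cons.
have [q1 [q2 [y [E1 E2 E3 E4 E5]]]] := IH _ _ Hw Hg' HG Hfin'.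
exists (e :: q1), q2, y; split => //; first by rewrite E1.
by rewrite pcost_cons addeA.
Qed.

Lemma goal_bound g par op s : Inv g par op -> s \in op ->
  (forall t, t \in op -> fval eps h g s <= fval eps h g t) ->
  forall q, goal_path succ Goal s0 q -> g s <= eps%:E * pcost ct q.
Proof.
move=> I Hs Hmin q Hq.
have eps_gt0 : (0 < eps)%R by apply: lt_le_trans eps_ge1; exact: ltr01.
case: (boolP (pcost ct q < +oo)) => Hct; last first.
  have -> : pcost ct q = +oo by move: Hct; rewrite ltey negbK => /eqP.
  by rewrite mulry gtr0_sg // mul1e leey.
have Hc : 0 + pcost c q < +oo by rewrite add0e; exact: le_lt_trans (pcost_le q) Hct.
case/andP: Hq => Hw HG.
have H0 : g s0 <= 0 by rewrite (i_s0 I).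
have [q1 [q2 [y [E1 E2 E3 E4 E5]]]] := reach I Hw H0 HG Hc.
rewrite add0e in E5.
have Hadm : (h y)%:E <= pcost ct q2 by apply: adm; rewrite /goal_path E3 E4 HG.
have := Hmin y E2; rewrite /fval => Hf.
move: Hct; rewrite E1 pcost_cat => Hct.
have [P1 EP1] := fin_of (pcostt_ge0 q1) (addoo_l (pcostt_ge0 _) (pcostt_ge0 _) Hct).
have [P2 EP2] := fin_of (pcostt_ge0 q2) (addoo_r (pcostt_ge0 _) (pcostt_ge0 _) Hct).
have [gs Egs] := fin_of (i_ge0 I s) (i_op I Hs).
have [gy Egy] := fin_of (i_ge0 I y) (i_op I E2).
have P1ge0 : (0 <= P1)%R by rewrite -lee_fin -EP1 pcostt_ge0.
have Hgy : (gy <= P1)%R by rewrite -lee_fin -Egy -EP1; exact: le_trans E5 (pcost_le q1).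
rewrite EP2 lee_fin in Hadm.
rewrite Egs Egy -!EFinD lee_fin in Hf.
rewrite EP1 EP2 Egs -EFinD -EFinM lee_fin.
have := h_ge0 s; have := eps_ge1; nra.
Qed.

Lemma keylt_irr (g : V -> \bar R) t x : keylt g t x x = false.
Proof. by rewrite /keylt ltxx ltnn andbF. Qed.

Lemma keylt_trans (g : V -> \bar R) t x y z :
  keylt g t y x -> keylt g t z y -> keylt g t z x.
Proof.
rewrite /keylt => /orP[H1|/andP[/eqP H1 T1]] /orP[H2|/andP[/eqP H2 T2]].
- by rewrite (lt_trans H2 H1).
- by rewrite H2 H1.
- by rewrite -H1 H2.
- by rewrite H2 H1 eqxx (ltn_trans T2 T1) orbT.
Qed.

Lemma is_walk_rcons s p e :
  is_walk succ s (rcons p e) = is_walk succ s p && (e.1 == walk_end succ s p).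
Proof. by elim: p s => [|e' p IH] s /=; rewrite ?andbT // IH andbA. Qed.

Lemma walk_end_rcons s p e : walk_end succ s (rcons p e) = succ e.1 e.2.
Proof. by elim: p s => [|e' p IH] s /=. Qed.

Lemma backtrack_ok g par op : Inv g par op -> forall x, g x < +oo ->
  [/\ is_walk succ s0 (backtrack #|V| par x), walk_end succ s0 (backtrack #|V| par x) = x
    & pcost c (backtrack #|V| par x) <= g x].
Proof.
move=> I; have [t Ht] := i_par I.
pose below x := [set y | keylt g t y x].
suff H : forall n x, (#|below x| < n)%N -> g x < +oo ->
  [/\ is_walk succ s0 (backtrack n par x), walk_end succ s0 (backtrack n par x) = x
    & pcost c (backtrack n par x) <= g x].
  move=> x Hx; apply: H => //.
  have : (#|below x| + #|~: below x| = #|V|)%N by rewrite cardsC.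
  have : (0 < #|~: below x|)%N by apply/card_gt0P; exists x; rewrite !inE keylt_irr.
  move=> H1 H2; rewrite -H2; rewrite -[X in (X < _)%N]addn0 ltn_add2l //.
elim=> [|n IH] x //= Hn Hx.
case E: (par x) => [e|].
  have [S1 S2 S3] := Ht x e E.
  have He : g e.1 < +oo.
    apply: le_lt_trans Hx; apply: le_trans S2; exact: leeDl.
  have Hb : (#|below e.1| < n)%N.
    have Hn' : (#|below x| <= n)%N by rewrite -ltnS.
    apply: leq_trans Hn'; apply: (@leq_ltn_trans #|below x :\ e.1|).
      apply: subset_leq_card; apply/subsetP => y; rewrite !inE => Hy.
      rewrite (keylt_trans S3 Hy) andbT; apply/eqP => Eye.
      by rewrite Eye keylt_irr in Hy.
    by rewrite [X in (_ < X)%N](cardsD1 e.1) inE S3.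
  have [W1 W2 W3] := IH e.1 Hb He.
  split.
  - by rewrite is_walk_rcons W1 W2 eqxx.
  - by rewrite walk_end_rcons S1.
  - rewrite pcost_rcons; apply: le_trans S2; exact: leeD2r.
case: (i_none I E) => [->|Ex]; last by rewrite Ex ltxx in Hx.
by split => //; rewrite /pcost big_nil; exact: i_ge0 I s0.
Qed.

Lemma exists_min (f : V -> \bar R) (S : {set V}) x0 : x0 \in S ->
  exists2 s, s \in S & forall t, t \in S -> f s <= f t.
Proof.
suff H : forall (l : seq V) x1, x1 \in l -> exists2 s, s \in l & forall t, t \in l -> f s <= f t.
  move=> Hx; have Hx' : x0 \in enum S by rewrite mem_enum.
  have [s Hs Hm] := H (enum S) x0 Hx'.
  by exists s; [rewrite -mem_enum | move=> t Ht; apply: Hm; rewrite mem_enum].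
elim=> [//|z l IH] x1 Hx.
case: l IH Hx => [|w l] IH Hx.
  by exists z; rewrite ?inE // => t; rewrite inE => /eqP ->.
have [m Hm Hmin] := IH w (mem_head w l).
case/orP: (le_total (f z) (f m)) => Hzm.
  exists z; first exact: mem_head.
  move=> t; rewrite in_cons => /orP[/eqP -> //|/Hmin]; exact: le_trans.
exists m; first by rewrite in_cons Hm orbT.
by move=> t; rewrite in_cons => /orP[/eqP -> //|/Hmin].
Qed.

Definition Pres (r : option (\bar R * seq (V * A))) : Prop :=
  match r with
  | None => forall q, goal_path succ Goal s0 q -> pcost c q = +oo
  | Some (gv, p) => [/\ goal_path succ Goal s0 p, pcost c p <= gv &
       forall q, goal_path succ Goal s0 q -> gv <= eps%:E * pcost ct q]
  end.

Definition Good (st : astate R V A) : Prop :=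
  match st with Run g par op => Inv g par op | Fin r => Pres r end.

Notation step := (astep succ c Goal eps h).

Lemma astep_good st : Good st -> Good (step st).
Proof.
case: st => [g par op|r] //= I.
case: pickP => [s /andP[Hs /forallP Hmin]|Hn].
  have Hmin' : forall t, t \in op -> fval eps h g s <= fval eps h g t.
    by move=> t Ht; move/implyP: (Hmin t); apply.
  case: ifP => HsG /=.
    have [W1 W2 W3] := backtrack_ok I (i_op I Hs).
    split => //; [by rewrite /goal_path W1 W2 HsG | exact: goal_bound I Hs Hmin'].
  have := step_inv I Hs (negbT HsG).
  by case: (foldl _ _ _) => [[g' par'] op'].
move=> q Hq.
case: (boolP (pcost c q < +oo)) => Hc; last by move: Hc; rewrite ltey negbK => /eqP.
case/andP: Hq => Hw HG.
have H0 : g s0 <= 0 by rewrite (i_s0 I).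
have Hc' : 0 + pcost c q < +oo by rewrite add0e.
have [q1 [q2 [y [_ Hy _ _ _]]]] := reach I Hw H0 HG Hc'.
have [m Hm Hmin] := exists_min (fval eps h g) Hy.
move: (Hn m); rewrite /= Hm /= => /negP; case.
by apply/forallP => t; apply/implyP; exact: Hmin.
Qed.

Lemma astep_run g par op : Inv g par op ->
  (exists r, step (Run g par op) = Fin r) \/
  exists g' par' op', [/\ step (Run g par op) = Run g' par' op', Inv g' par' op' &
     (mu g' op' < mu g op)%N].
Proof.
move=> I; rewrite /astep; case: pickP => [s /andP[Hs _]|_]; last by left; eexists.
case: ifP => HsG; first by left; eexists.
right; have := step_inv I Hs (negbT HsG); have := step_mu I Hs (negbT HsG).
case: (foldl _ _ _) => [[g' par'] op'] /= Hmu I'.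
by exists g', par', op'.
Qed.

Lemma good_term st : Good st -> exists n r, iter n step st = Fin r.
Proof.
case: st => [g par op|r] /=; last by exists 0%N, r.
move=> I; have : (mu g op <= mu g op)%N by [].
set m := {2}(mu g op); clearbody m.
elim: m g par op I => [|m IH] g par op I Hm;
  case: (astep_run I) => [[r Er]|[g' [par' [op' [E I' Hmu]]]]];
  try by exists 1%N, r.
  by move: (leq_trans Hmu Hm).
have Hm' : (mu g' op' <= m)%N by rewrite -ltnS; exact: leq_trans Hmu Hm.
have [n [r Hr]] := IH _ _ _ I' Hm'.
by exists n.+1, r; rewrite iterSr E.
Qed.

Lemma iter_good n st : Good st -> Good (iter n step st).
Proof. by move=> G; elim: n => [|n IH] //=; exact: astep_good. Qed.

Lemma good_init : Good (ainit R A s0).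
Proof. exact: init_inv. Qed.
End Proofs.


Lemma stab (T : finType) (Ev : nat -> {set T}) :
  (forall k, Ev k \subset Ev k.+1) -> exists K, forall k, Ev k \subset Ev K.
Proof.
move=> Hm.
have mono : forall i j, (i <= j)%N -> Ev i \subset Ev j.
  move=> i j /subnK <-; elim: (j - i)%N => [|d IH]; first exact: subxx.
  by rewrite addSn; exact: subset_trans IH (Hm _).
apply: NNPP => Hn.
have H : forall K, exists k, ~~ (Ev k \subset Ev K).
  move=> K; apply: NNPP => H'; apply: Hn; exists K => k; apply: NNPP => Hk.
  by apply: H'; exists k; apply/negP.
have Hc : forall n, exists K, (n <= #|Ev K|)%N.
  elim=> [|n [K HK]]; first by exists 0%N.
  have [k Hk] := H K.
  have HKk : (K < k)%N.
    by rewrite ltnNge; apply/negP => Hle; rewrite (mono _ _ Hle) in Hk.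
  exists k; apply: leq_ltn_trans HK _; apply: proper_card.
  by rewrite properE (mono _ _ (ltnW HKk)) Hk.
have [K HK] := Hc (#|T|.+1).
by move: (leq_trans HK (max_card _)); rewrite ltnn.
Qed.

Lemma feas_fin (R : realFieldType) (V A : finType) (ct : V -> A -> \bar R) p :
  (forall s a, 0 <= ct s a) -> feasible ct p -> pcost ct p < +oo.
Proof.
move=> H0; elim: p => [|e p IH] /=; first by rewrite /pcost big_nil ltry.
case/andP=> He Hp; rewrite /pcost big_cons; apply: lte_add_pinfty => //; exact: IH.
Qed.

Lemma fin_feas (R : realFieldType) (V A : finType) (ct : V -> A -> \bar R) p :
  (forall s a, 0 <= ct s a) -> pcost ct p < +oo -> feasible ct p.
Proof.
move=> H0; elim: p => [|e p IH] //=.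
have Hp0 : 0 <= pcost ct p by rewrite /pcost; apply: sume_ge0.
rewrite /pcost big_cons -/(pcost ct p) => Hs.
rewrite (addoo_l (H0 _ _) Hp0 Hs) /=; apply: IH; exact: addoo_r (H0 _ _) Hp0 Hs.
Qed.

Unset Implicit Arguments.

Theorem theorem2 (R : realFieldType) (V A : finType) (succ : V -> A -> V)
    (s0 : V) (Goal : {set V}) (ct cl : V -> A -> \bar R)
    (eps : R) (h : V -> R) (Ev : nat -> {set (V * A)}) :
  (forall s a, 0 <= cl s a /\ cl s a <= ct s a) ->
  (1 <= eps)%R ->
  (forall s, 0 <= h s)%R ->
  admissible succ ct Goal h ->
  (exists p, goal_path succ Goal s0 p && feasible ct p) ->
  (forall k, Ev k \subset Ev k.+1) ->
  (forall k g p, search succ ct cl Goal s0 eps h Ev k (Some (g, p)) ->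
     forall e, e \in p -> exists k', e \in Ev k') ->
  (exists k p, mplp_returns succ ct cl Goal s0 eps h Ev k p /\
     goal_path succ Goal s0 p /\
     forall q, goal_path succ Goal s0 q -> pcost ct p <= eps%:E * pcost ct q)
  /\
  (forall k p, mplp_returns succ ct cl Goal s0 eps h Ev k p ->
     forall q, goal_path succ Goal s0 q -> pcost ct p <= eps%:E * pcost ct q).
Proof.
move=> Hc Heps Hh Hadm [q0 Hq0] Hmono Hev.
have ct_ge0 : forall s a, 0 <= ct s a.
  by move=> s a; exact: le_trans (Hc s a).1 (Hc s a).2.
have c_ge0 : forall k s a, 0 <= icost ct cl (Ev k) s a.
  by move=> k s a; rewrite /icost; case: ifP => _; [exact: ct_ge0 | exact: (Hc s a).1].
have c_le : forall k s a, icost ct cl (Ev k) s a <= ct s a.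
  by move=> k s a; rewrite /icost; case: ifP => _; [exact: lexx | exact: (Hc s a).2].
have Pr : forall k r, search succ ct cl Goal s0 eps h Ev k r ->
    Pres succ (icost ct cl (Ev k)) ct Goal s0 eps r.
  move=> k r [n Hn].
  have := iter_good (c_ge0 k) (c_le k) Heps Hh Hadm n (good_init succ ct Goal s0 eps (c_ge0 k)).
  by rewrite Hn.
have Tm : forall k, exists r, search succ ct cl Goal s0 eps h Ev k r.
  move=> k; have [n [r Hr]] := good_term h (c_ge0 k) (good_init succ ct Goal s0 eps (c_ge0 k)).
  by exists r, n.
have Bound : forall k p, mplp_returns succ ct cl Goal s0 eps h Ev k p ->
     forall q, goal_path succ Goal s0 q -> pcost ct p <= eps%:E * pcost ct q.
  move=> k p [_ [_ [gg [pk [Hs [_ [_ Hle]]]]]]] q Hq.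
  have := Pr _ _ Hs => /= -[_ _ B]; exact: le_trans Hle (B q Hq).
split; last exact: Bound.
have [K HK] := stab Hmono.
have [r Hr] := Tm K.
case/andP: Hq0 => Hgp0 Hfeas0.
have Hq0fin := feas_fin ct_ge0 Hfeas0.
have := Pr _ _ Hr; case: r Hr => [[gv p]|] Hr /=; last first.
  move=> Hnone; have := Hnone q0 Hgp0.
  have : pcost (icost ct cl (Ev K)) q0 < +oo.
    apply: le_lt_trans Hq0fin; rewrite /pcost; apply: lee_sum => e _; exact: c_le.
  by move=> H1 H2; rewrite H2 ltxx in H1.
move=> [Hgp Hcp B].
have Hin : all (fun e => e \in Ev K) p.
  by apply/allP => e He; have [k' Hk'] := Hev K gv p Hr e He; exact: (subsetP (HK k')).
have Eq : pcost ct p = pcost (icost ct cl (Ev K)) p.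
  rewrite /pcost; apply: eq_big_seq => -[s a] He.
  by rewrite /icost (allP Hin (s, a) He).
have HpB : pcost ct p <= gv by rewrite Eq.
have Hfin : pcost ct p < +oo.
  apply: le_lt_trans HpB _; apply: le_lt_trans (B q0 Hgp0) _.
  have [P EP] := fin_of (pcost_ge0 ct_ge0 q0) Hq0fin.
  by rewrite EP -EFinM ltry.
have Hfeas := fin_feas ct_ge0 Hfin.
have M : mplp_returns succ ct cl Goal s0 eps h Ev K p.
  split; first by move=> i _; exact: Tm i.
  split; first by exists K, gv.
  by exists gv, p.
by exists K, p; split => //; split => //; exact: Bound M.
Qed.
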